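(* If a monoid $M$ is the limit of an inductive system of strongly sofic monoids, then $M$ is strongly sofic.
   Context: An inductive system of monoids $(M_i,\psi_{ji})$ consists of a directed set $I$, monoids $M_i$ ($i\in I$), and monoid morphisms $\psi_{ji}\colon M_i\to M_j$ for $i\le j$ with $\psi_{ii}=\mathrm{Id}$ and $\psi_{kj}\circ\psi_{ji}=\psi_{ki}$ for $i\le j\le k$. Its limit is $\coprod_i M_i/\sim$, where $x_i\sim x_j$ ($x_i\in M_i$, $x_j\in M_j$) iff $\psi_{\ell i}(x_i)=\psi_{\ell j}(x_j)$ for some $\ell\ge i,j$, with multiplication $[x_i][y_j]=[\psi_{\ell i}(x_i)\psi_{\ell j}(y_j)]$ for $\ell\ge i,j$. Hamming metric on $\operatorname{Map}(D)$ (maps $D\to D$, $D$ finite non-empty): $d_D^{\mathrm{Ham}}(f,g)=\frac{1}{|D|}|\{v:f(v)\ne g(v)\}|$. A monoid $M$ is strongly sofic if for every finite $K\subset M$ there is an integer $\Delta_K\ge1$ such that for every $\varepsilon>0$ there exist a non-empty finite set $D$ and a map $\sigma\colon M\to\operatorname{Map}(D)$ with (1) $\sigma(1_M)=\mathrm{Id}_D$; (2) $d_D^{\mathrm{Ham}}(\sigma(k_1k_2),\sigma(k_1)\sigma(k_2))\le\varepsilon$ for $k_1,k_2\in K$; (3) $d_D^{\mathrm{Ham}}(\sigma(k_1),\sigma(k_2))\ge1-\varepsilon$ for distinct $k_1,k_2\in K$; (4) $|\sigma(k)^{-1}(v)|\le\Delta_K$ for $k\in K$, $v\in D$. *)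

(* Defs.v *)
From mathcomp Require Import all_boot.
From Stdlib Require Import Reals List.

Set Implicit Arguments.
Unset Strict Implicit.
Unset Printing Implicit Defensive.

Record monoid := Monoid {
  mcarrier :> Type;
  mmul : mcarrier -> mcarrier -> mcarrier;
  mone : mcarrier;
  mmulA : forall x y z, mmul x (mmul y z) = mmul (mmul x y) z;
  mmul1x : forall x, mmul mone x = x;
  mmulx1 : forall x, mmul x mone = x
}.

Definition is_monoid_morphism (M N : monoid) (f : M -> N) : Prop :=
  f (mone M) = mone N /\ forall x y, f (mmul x y) = mmul (f x) (f y).

Definition directed (I : Type) (le : I -> I -> bool) : Prop :=
  inhabited I /\
  (forall i, le i i) /\
  (forall i j k, le i j -> le j k -> le i k) /\
  (forall i j, exists k, le i k /\ le j k).

Definition inductive_system (I : Type) (le : I -> I -> bool)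
    (Ms : I -> monoid) (psi : forall i j, le i j -> Ms i -> Ms j) : Prop :=
  directed le /\
  (forall i j (h : le i j), is_monoid_morphism (psi i j h)) /\
  (forall i (h : le i i) x, psi i i h x = x) /\
  (forall i j k (hij : le i j) (hjk : le j k) (hik : le i k) x,
      psi j k hjk (psi i j hij x) = psi i k hik x).

(* M (with maps phi_i : M_i -> M) is the limit of the inductive system:
   M is identified with (coprod_i M_i)/~ via [x_i] |-> phi_i x_i, where
   x_i ~ x_j iff psi_li x_i = psi_lj x_j for some l >= i,j, and the
   multiplication of M is [x_i][y_j] = [psi_li x_i * psi_lj y_j]. *)
Definition is_inductive_limit (I : Type) (le : I -> I -> bool)
    (Ms : I -> monoid) (psi : forall i j, le i j -> Ms i -> Ms j)
    (M : monoid) (phi : forall i, Ms i -> M) : Prop :=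
  (forall m : M, exists i (x : Ms i), phi i x = m) /\
  (forall i j (x : Ms i) (y : Ms j),
      phi i x = phi j y <->
      exists l (hil : le i l) (hjl : le j l), psi i l hil x = psi j l hjl y) /\
  (forall i j l (hil : le i l) (hjl : le j l) (x : Ms i) (y : Ms j),
      mmul (phi i x) (phi j y) = phi l (mmul (psi i l hil x) (psi j l hjl y))).

Definition ham_dist (D : finType) (f g : D -> D) : R :=
  (INR #|[pred v | f v != g v]| / INR #|D|)%R.

Definition strongly_sofic (M : monoid) : Prop :=
  forall K : list M, exists Delta : nat, (1 <= Delta)%N /\
    forall eps : R, (0 < eps)%R ->
      exists (D : finType) (sigma : M -> D -> D),
        (0 < #|D|)%N /\
        (forall v, sigma (mone M) v = v) /\
        (forall k1 k2, In k1 K -> In k2 K ->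
           (ham_dist (sigma (mmul k1 k2)) (fun v => sigma k1 (sigma k2 v)) <= eps)%R) /\
        (forall k1 k2, In k1 K -> In k2 K -> k1 <> k2 ->
           (ham_dist (sigma k1) (sigma k2) >= 1 - eps)%R) /\
        (forall k v, In k K -> (#|[pred w | sigma k w == v]| <= Delta)%N).

(* Main.v *)
Require Import Defs.
From mathcomp Require Import all_boot.
From Stdlib Require Import Reals List.
From Stdlib Require Import Classical ClassicalEpsilon.

Theorem proposition3p11 (I : Type) (le : I -> I -> bool)
    (Ms : I -> monoid) (psi : forall i j, le i j -> Ms i -> Ms j)
    (M : monoid) (phi : forall i, Ms i -> M) :
  inductive_system psi ->
  @is_inductive_limit I le Ms psi M phi ->
  (forall i, strongly_sofic (Ms i)) ->
  strongly_sofic M.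
Proof.
move=> [[[i0] [refl [trans dir]]] [morph [pid pcomp]]] [surj [eqv mulphi]] sofic K.
have psiI : forall i j (h1 h2 : le i j) x, psi i j h1 x = psi i j h2 x.
  by move=> i j h1 h2 x; rewrite (bool_irrelevance h1 h2).
have phipsi : forall i j (h : le i j) x, phi j (psi i j h x) = phi i x.
  move=> i j h x; apply/eqv; exists j, (refl j), h; by rewrite pid.
have phi1 : forall l, phi l (mone _) = mone M.
  move=> l.
  have left : forall m, mmul (phi l (mone _)) m = m.
    move=> m; case: (surj m) => j [y <-]; case: (dir l j) => k [hl hj].
    by rewrite (mulphi l j k hl hj) (morph l k hl).1 mmul1x phipsi.
  by rewrite -[LHS]mmulx1 left.
have phimul : forall l a b, phi l (mmul a b) = mmul (phi l a) (phi l b).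
  by move=> l a b; rewrite (mulphi l l l (refl l) (refl l)) !pid.
have lift : exists l0 (K' : list (Ms l0)),
    forall m, In m K -> exists a, In a K' /\ phi l0 a = m.
  elim: K => [|m K IH]; first by exists i0, nil.
  case: IH => l0 [K' HK']; case: (surj m) => i [x hx].
  case: (dir i l0) => k [hi hl].
  exists k, (psi i k hi x :: map (psi l0 k hl) K').
  move=> m' [<-|Hm'].
    by exists (psi i k hi x); split; [left|rewrite phipsi].
  case: (HK' m' Hm') => a [Ha <-].
  by exists (psi l0 k hl a); split; [right; apply in_map|rewrite phipsi].
have B : forall l0 (P : list (Ms l0 * Ms l0)), exists l (h : le l0 l),
    forall p, In p P -> phi l0 (fst p) = phi l0 (snd p) ->
      psi l0 l h (fst p) = psi l0 l h (snd p).
  move=> l0; elim=> [|[x y] P IH]; first by exists l0, (refl l0).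
  case: IH => l1 [h1 H1].
  case: (classic (phi l0 x = phi l0 y)) => [e|ne].
    case: (proj1 (eqv _ _ x y) e) => l2 [hx [hy exy]]; rewrite (psiI _ _ hy hx) in exy.
    case: (dir l1 l2) => l3 [h13 h23]; have h03 := trans _ _ _ h1 h13.
    exists l3, h03 => -[x' y'] /= [[<- <-]|Hp] e'.
      by rewrite -(pcomp _ _ _ hx h23 h03 x) -(pcomp _ _ _ hx h23 h03 y) exy.
    rewrite -(pcomp _ _ _ h1 h13 h03 x') -(pcomp _ _ _ h1 h13 h03 y').
    by rewrite (H1 _ Hp e').
  exists l1, h1 => p [<-|Hp] e'; first by contradiction.
  exact: H1.
case: lift => l0 [K' HK'].
pose L0 := mone (Ms l0) :: K' ++ flat_map (fun a => map (fun b => mmul a b) K') K'.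
case: (B l0 (list_prod L0 L0)) => l [h Hl].
have inj : forall x y, In x L0 -> In y L0 ->
    phi l (psi l0 l h x) = phi l (psi l0 l h y) -> psi l0 l h x = psi l0 l h y.
  move=> x y Hx Hy; rewrite !phipsi => e.
  by apply: (Hl (x, y)) => //; apply in_prod.
pose L := map (psi l0 l h) L0.
pose r m := epsilon (inhabits (mone (Ms l))) (fun x => In x L /\ phi l x = m).
have rE : forall x, In x L0 -> r (phi l (psi l0 l h x)) = psi l0 l h x.
  move=> x Hx.
  have : exists y, In y L /\ phi l y = phi l (psi l0 l h x).
    by exists (psi l0 l h x); split; [apply in_map|].
  move/(epsilon_spec (inhabits (mone (Ms l)))); rewrite -/(r _).
  case=> /in_map_iff [y [<- Hy]] e.
  exact: inj.
have krep : forall k, In k K -> exists a, In a K' /\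
    k = phi l (psi l0 l h a) /\ r k = psi l0 l h a.
  move=> k Hk; case: (HK' k Hk) => a [Ha <-]; exists a; rewrite phipsi.
  split=> //; split=> //; rewrite -(phipsi l0 l h a) rE //.
  by right; apply in_or_app; left.
pose KL := map (psi l0 l h) K'.
case: (sofic l KL) => Delta [hD HD]; exists Delta; split => // eps heps.
case: (HD eps heps) => D [sigma [hD0 [s1 [smul [sdist sdelta]]]]].
exists D, (fun m => sigma (r m)); split => //; split; [|split; [|split]].
- move=> v; rewrite -(phi1 l0) -(phipsi l0 l h) rE; last by left.
  by rewrite (morph l0 l h).1 s1.
- move=> k1 k2 H1 H2.
  case: (krep k1 H1) => a1 [Ha1 [e1 r1]]; case: (krep k2 H2) => a2 [Ha2 [e2 r2]].
  rewrite r1 r2 e1 e2 -phimul -(morph l0 l h).2 rE.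
    rewrite (morph l0 l h).2; apply smul; apply in_map => //.
  right; apply in_or_app; right; apply in_flat_map; exists a1; split => //.
  by apply in_map.
- move=> k1 k2 H1 H2 ne.
  case: (krep k1 H1) => a1 [Ha1 [e1 r1]]; case: (krep k2 H2) => a2 [Ha2 [e2 r2]].
  rewrite r1 r2; apply sdist; try apply in_map => //.
  by move=> eq; apply: ne; rewrite e1 e2 eq.
- move=> k v Hk; case: (krep k Hk) => a [Ha [e rk]].
  by rewrite rk; apply sdelta; apply in_map.
Qed.
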